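(* Let $f:\mathbb{R}^d\to\mathbb{R}$ be $L$-smooth (i.e. differentiable with $L$-Lipschitz gradient), let $g:\mathbb{R}^d\to\mathbb{R}$, let $h:\mathbb{R}^d\to\mathbb{R}\cup\{+\infty\}$ be proper, closed and convex, and let $\lambda>0$. Suppose that for every $w$ the minimum in $\min_{x}\left(\frac{1}{2\lambda}\|w-x\|_2^2+g(x)\right)$ is attained, and let $\zeta^{\lambda}(w)$ denote a chosen minimizer. Define $e_{\lambda}g(w)=\min_{x}\left(\frac{1}{2\lambda}\|w-x\|_2^2+g(x)\right)$, $D^{\lambda}(w)=\sup_{x\in\mathbb{R}^d}\left(\frac{1}{\lambda}w^Tx-\frac{1}{2\lambda}\|x\|_2^2-g(x)\right)$, and $\tilde\Phi_{\lambda}(w)=f(w)+e_{\lambda}g(w)+h(w)$. Fix a point $w^k\in\mathbb{R}^d$ and define $$U^k_{\lambda}(w)=\frac{1}{2\lambda}\|w\|_2^2-D^{\lambda}(w^k)-\frac{1}{\lambda}\zeta^{\lambda}(w^k)^T(w-w^k),\qquad E^k_{\lambda}(w)=f(w)+U^k_{\lambda}(w).$$ Then: (i) $E^k_{\lambda}(w)+h(w)\ge \tilde\Phi_{\lambda}(w)$ for all $w\in\mathbb{R}^d$; (ii) $E^k_{\lambda}(w^k)+h(w^k)=\tilde\Phi_{\lambda}(w^k)$; (iii) $E^k_{\lambda}$ is $L_{\lambda}$-smooth with $L_{\lambda}:=L+\frac{1}{\lambda}$.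
   Context: A function is $L$-smooth if it is differentiable and its gradient is $L$-Lipschitz with respect to the Euclidean norm. *)

(* Defs.v *)
From HB Require Import structures.
From mathcomp Require Import all_boot all_order all_algebra.
From mathcomp Require Import all_classical all_reals all_analysis.
Set Implicit Arguments. Unset Strict Implicit. Unset Printing Implicit Defensive.
Import Order.TTheory GRing.Theory Num.Theory.
Import numFieldNormedType.Exports.
Local Open Scope classical_set_scope.
Local Open Scope ring_scope.

Section Defs.
Context {R : realType} {d : nat}.
Local Notation V := 'rV[R]_d.

Definition dotv (u v : V) : R := \sum_(i < d) u ord0 i * v ord0 i.
Definition norm2 (u : V) : R := Num.sqrt (dotv u u).

Definition is_gradient (f : V -> R) (x gv : V) : Prop :=
  differentiable f x /\ forall v : V, 'd f x v = dotv gv v.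

Definition Lsmooth (L : R) (f : V -> R) : Prop :=
  exists grad : V -> V,
    (forall x, is_gradient f x (grad x)) /\
    (forall x y, norm2 (grad x - grad y) <= L * norm2 (x - y)).

Definition proper_fun (h : V -> \bar R) : Prop :=
  (forall x, h x != -oo%E) /\ (exists x, h x != +oo%E).
Definition closed_fun (h : V -> \bar R) : Prop := lower_semicontinuous h.
Definition convex_efun (h : V -> \bar R) : Prop :=
  forall (x y : V) (t : R), 0 <= t <= 1 ->
    (h ((t *: x + (1 - t) *: y)%R : V) <= t%:E * h x + (1 - t)%:E * h y)%E.

Definition moreau_env (lam : R) (g : V -> R) (w : V) : R :=
  inf [set (2 * lam)^-1 * norm2 (w - x) ^+ 2 + g x | x in [set: V]].
Definition Dlam (lam : R) (g : V -> R) (w : V) : R :=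
  sup [set lam^-1 * dotv w x - (2 * lam)^-1 * norm2 x ^+ 2 - g x
      | x in [set: V]].
End Defs.

(* Main.v *)
Require Import Defs.
From HB Require Import structures.
From mathcomp Require Import all_boot all_order all_algebra.
From mathcomp Require Import all_classical all_reals all_analysis.
From mathcomp Require Import ring lra.
Import Order.TTheory GRing.Theory Num.Theory.
Import numFieldNormedType.Exports.
Local Open Scope classical_set_scope.
Local Open Scope ring_scope.

Set Implicit Arguments. Unset Strict Implicit.
Section Aux.
Variables (R : realType) (d : nat).
Local Notation V := 'rV[R]_d.
Implicit Types u v w : V.

Lemma dotvC u v : dotv u v = dotv v u.
Proof. by apply: eq_bigr => i _; rewrite mulrC. Qed.

Lemma dotvDl u v w : dotv (u + v) w = dotv u w + dotv v w.
Proof. by rewrite /dotv -big_split; apply: eq_bigr => i _; rewrite mxE mulrDl. Qed.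

Lemma dotvZl c u w : dotv (c *: u) w = c * dotv u w.
Proof. by rewrite /dotv mulr_sumr; apply: eq_bigr => i _; rewrite mxE mulrA. Qed.

Lemma dotvNl u w : dotv (- u) w = - dotv u w.
Proof. by rewrite /dotv -sumrN; apply: eq_bigr => i _; rewrite mxE mulNr. Qed.

Lemma dotvBl u v w : dotv (u - v) w = dotv u w - dotv v w.
Proof. by rewrite dotvDl dotvNl. Qed.

Lemma dotvDr u v w : dotv w (u + v) = dotv w u + dotv w v.
Proof. by rewrite dotvC dotvDl !(dotvC w). Qed.
Lemma dotvZr c u w : dotv w (c *: u) = c * dotv w u.
Proof. by rewrite dotvC dotvZl dotvC. Qed.
Lemma dotvBr u v w : dotv w (u - v) = dotv w u - dotv w v.
Proof. by rewrite dotvC dotvBl !(dotvC w). Qed.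
Lemma dotv0l w : dotv 0 w = 0.
Proof. by rewrite /dotv big1 // => i _; rewrite mxE mul0r. Qed.

Lemma dotv_ge0 u : 0 <= dotv u u.
Proof. by apply: sumr_ge0 => i _; rewrite -expr2 sqr_ge0. Qed.

Lemma norm2_sq u : norm2 u ^+ 2 = dotv u u.
Proof. by rewrite /norm2 sqr_sqrtr // dotv_ge0. Qed.

Lemma norm2_ge0 u : 0 <= norm2 u.
Proof. exact: sqrtr_ge0. Qed.

Lemma dotv_eq0 {u} : dotv u u = 0 -> u = 0.
Proof.
move=> /eqP; rewrite psumr_eq0; last by move=> i _; rewrite -expr2 sqr_ge0.
move=> /allP H; apply/rowP => i; rewrite mxE.
have /H : i \in index_enum 'I_d by rewrite mem_index_enum.
by rewrite /= mulf_eq0 orbb => /eqP.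
Qed.

Lemma CS u v : dotv u v ^+ 2 <= dotv u u * dotv v v.
Proof.
have [v0|vpos] := eqVneq (dotv v v) 0.
  by rewrite v0 (dotv_eq0 v0) dotvC dotv0l expr0n /= mulr0.
have vp : 0 < dotv v v by rewrite lt_def vpos dotv_ge0.
pose t := dotv u v / dotv v v.
have E : dotv (u - t *: v) (u - t *: v) =
   dotv u u - 2 * t * dotv u v + t ^+ 2 * dotv v v.
  rewrite dotvBl !dotvBr !dotvZl !dotvZr (dotvC v u); ring.
have := dotv_ge0 (u - t *: v); rewrite E => H.
rewrite -subr_ge0.
have -> : dotv u u * dotv v v - dotv u v ^+ 2 =
   dotv v v * (dotv u u - 2 * t * dotv u v + t ^+ 2 * dotv v v).
  rewrite /t; field; exact: vpos.
exact: mulr_ge0 (ltW vp) H.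
Qed.

Lemma dotv_le u v : dotv u v <= norm2 u * norm2 v.
Proof.
apply: (le_trans (ler_norm _)).
rewrite -sqrtr_sqr /norm2 -sqrtrM ?dotv_ge0 //.
by apply: ler_wsqrtr; exact: CS.
Qed.

Lemma norm2_tri u v : norm2 (u + v) <= norm2 u + norm2 v.
Proof.
have h : dotv (u + v) (u + v) <= (norm2 u + norm2 v) ^+ 2.
  rewrite dotvDl !dotvDr sqrrD !norm2_sq (dotvC v u).
  have := dotv_le u v; lra.
rewrite {1}/norm2.
have -> : norm2 u + norm2 v = Num.sqrt ((norm2 u + norm2 v) ^+ 2).
  by rewrite sqrtr_sqr ger0_norm // addr_ge0 // norm2_ge0.
exact: ler_wsqrtr.
Qed.

Lemma norm2Z c u : norm2 (c *: u) = `|c| * norm2 u.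
Proof.
by rewrite /norm2 dotvZl dotvZr mulrA -expr2 sqrtrM ?sqr_ge0 // sqrtr_sqr.
Qed.

Lemma isg_ext f g x a : (forall w, f w = g w) -> is_gradient f x a -> is_gradient g x a.
Proof. by move=> e; have -> : f = g by apply: funext. Qed.

Lemma isg_add f g x a b : is_gradient f x a -> is_gradient g x b ->
  is_gradient (fun w => f w + g w) x (a + b).
Proof.
move=> [df ef] [dg eg]; have -> : (fun w => f w + g w) = f + g by [].
split; first exact: differentiableD.
by move=> v; rewrite diffD //= ef eg dotvDl.
Qed.

Lemma isg_scale f x a c : is_gradient f x a ->
  is_gradient (fun w => c * f w) x (c *: a).
Proof.
move=> [df ef]; have -> : (fun w => c * f w) = c *: f by [].
split; first exact: differentiableZ.
by move=> v; rewrite diffZ //= ef dotvZl.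
Qed.

Lemma isg_cst (c : R) x : is_gradient (fun _ : V => c) x 0.
Proof.
split; first exact: differentiable_cst.
by move=> v; rewrite diff_cst dotv0l.
Qed.

Lemma isg_mul f g x a b : is_gradient f x a -> is_gradient g x b ->
  is_gradient (fun w => f w * g w) x (f x *: b + g x *: a).
Proof.
move=> [df ef] [dg eg]; have -> : (fun w => f w * g w) = f * g by [].
split; first exact: differentiableM.
move=> v; rewrite diffM //; transitivity (f x * 'd g x v + g x * 'd f x v); first by [].
by rewrite ef eg dotvDl !dotvZl.
Qed.


Definition coordf (i : 'I_d) (w : V) : R := w ord0 i.
Lemma coordf_lin i : linear (coordf i).
Proof. by move=> c u v; rewrite /coordf !mxE. Qed.
HB.instance Definition _ i := GRing.isLinear.Build R V R _ (coordf i) (coordf_lin i).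

Lemma dotv_delta i w : dotv (delta_mx 0 i) w = w ord0 i.
Proof.
rewrite /dotv (bigD1 i) //= big1 ?addr0.
  by rewrite mxE !eqxx mul1r.
by move=> j ji; rewrite mxE eqxx /= (negbTE ji) mul0r.
Qed.

Lemma isg_coord i x : is_gradient (fun w : V => w ord0 i) x (delta_mx 0 i).
Proof.
have -> : (fun w : V => w ord0 i) = (coordf i : {linear V -> R}) by [].
have cc : continuous (coordf i : {linear V -> R}) by exact: coord_continuous.
split; first exact: linear_differentiable.
by move=> v; rewrite diff_lin // dotv_delta.
Qed.

Lemma isg_sum n (F : 'I_n -> V -> R) (G : 'I_n -> V) x :
  (forall i, is_gradient (F i) x (G i)) ->
  is_gradient (fun w => \sum_(i < n) F i w) x (\sum_(i < n) G i).
Proof.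
move=> H; apply: (@isg_ext (\sum_(i < n) F i)).
  by move=> w; rewrite fct_sumE.
apply: (@big_ind2 _ _ (fun (f : V -> R) (a : V) => is_gradient f x a)).
- exact: isg_cst.
- by move=> f1 a1 f2 a2 h1 h2; exact: isg_add h1 h2.
- by move=> i _; exact: H.
Qed.

Lemma isg_lin (a x : V) : is_gradient (dotv a) x a.
Proof.
apply: (@isg_ext (fun w => \sum_(i < d) (fun w : V => a ord0 i * w ord0 i) w)) => //.
rewrite [X in is_gradient _ _ X]row_sum_delta.
apply: isg_sum => i; exact: isg_scale (isg_coord i x).
Qed.

Lemma isg_sq (x : V) : is_gradient (fun w => dotv w w) x (2 *: x).
Proof.
apply: (@isg_ext (fun w => \sum_(i < d) (fun w : V => w ord0 i * w ord0 i) w)) => //.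
have -> : 2 *: x = \sum_(i < d) (x ord0 i *: delta_mx 0 i + x ord0 i *: delta_mx 0 i).
  by rewrite big_split /= -row_sum_delta scaler_nat.
apply: isg_sum => i; exact: isg_mul (isg_coord i x) (isg_coord i x).
Qed.

Lemma sqB u v : norm2 (u - v) ^+ 2 = dotv u u - 2 * dotv u v + dotv v v.
Proof. by rewrite norm2_sq dotvBl !dotvBr (dotvC v u); ring. Qed.
End Aux.

Lemma inf_attained (R : realType) (S : set R) m :
  S m -> (forall y, S y -> m <= y) -> inf S = m.
Proof.
move=> Sm lb; apply/eqP; rewrite eq_le; apply/andP; split.
  by apply: ge_inf => //; exists m => y /lb.
by apply: lb_le_inf; [exists m | move=> y /lb].
Qed.

Lemma sup_attained (R : realType) (S : set R) m :
  S m -> (forall y, S y -> y <= m) -> sup S = m.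
Proof.
move=> Sm ub; apply/eqP; rewrite eq_le; apply/andP; split.
  by apply: ge_sup; [exists m | move=> y /ub].
by apply: ub_le_sup => //; exists m => y /ub.
Qed.

Unset Implicit Arguments. Set Strict Implicit.
Theorem mainTheorem1 (R : realType) (d : nat)
  (f g : 'rV[R]_d -> R) (h : 'rV[R]_d -> \bar R) (L lam : R)
  (zeta : 'rV[R]_d -> 'rV[R]_d) (wk : 'rV[R]_d) :
  Lsmooth L f ->
  proper_fun h -> closed_fun h -> convex_efun h ->
  0 < lam ->
  (forall w x : 'rV[R]_d,
     (2 * lam)^-1 * norm2 (w - zeta w) ^+ 2 + g (zeta w)
       <= (2 * lam)^-1 * norm2 (w - x) ^+ 2 + g x) ->
  let Phi := fun w => ((f w + moreau_env lam g w)%:E + h w)%E in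
  let U := fun w => (2 * lam)^-1 * norm2 w ^+ 2 - Dlam lam g wk
                    - lam^-1 * dotv (zeta wk) (w - wk) in
  let E := fun w => f w + U w in
  [/\ (forall w, Phi w <= (E w)%:E + h w)%E,
      ((E wk)%:E + h wk = Phi wk)%E &
      Lsmooth (L + lam^-1) E].
Proof.
move=> HL _ _ _ lam0 Hz Phi U E.
set z := zeta wk.
have lamn0 : lam != 0 by rewrite gt_eqF.
have i2 : (2 * lam)^-1 = lam^-1 / 2 by rewrite invfM mulrC.
have menv w : moreau_env lam g w =
    (2 * lam)^-1 * norm2 (w - zeta w) ^+ 2 + g (zeta w).
  apply: inf_attained; first by exists (zeta w).
  by move=> y [x _ <-]; exact: Hz.
have Dk : Dlam lam g wk = lam^-1 * dotv wk z - (2 * lam)^-1 * norm2 z ^+ 2 - g z.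
  apply: sup_attained; first by exists z.
  move=> y [x _ <-]; have := Hz wk x; rewrite -/z !sqB !norm2_sq i2.
  set il := lam^-1; lra.
have Ueq w : U w = (2 * lam)^-1 * norm2 (w - z) ^+ 2 + g z.
  rewrite /U Dk !sqB !norm2_sq !dotvBr (dotvC wk z) (dotvC w z) i2.
  rewrite -/z; set il := lam^-1; lra.
split.
- move=> w; rewrite /Phi /E; apply: leeD => //; rewrite lee_fin lerD2l menv Ueq.
  exact: Hz.
- by rewrite /Phi /E Ueq menv.
have [gf [Hg Hlip]] := HL.
exists (fun x => gf x + lam^-1 *: (x - z)); split.
  move=> x.
  have -> : lam^-1 *: (x - z) =
      (2 * lam)^-1 *: (2 *: x) + (- lam^-1) *: z + 0.
    by apply/rowP => i; rewrite !mxE i2; field.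
  apply: (@isg_ext _ _ (fun w => f w + ((2 * lam)^-1 * dotv w w
             + (- lam^-1) * dotv z w + (- Dlam lam g wk + lam^-1 * dotv z wk)))).
    move=> w; rewrite /E /U norm2_sq dotvBr; ring.
  apply: isg_add; first exact: Hg.
  apply: isg_add; last exact: isg_cst.
  apply: isg_add; apply: isg_scale; [exact: isg_sq | exact: isg_lin].
move=> x y.
have -> : gf x + lam^-1 *: (x - z) - (gf y + lam^-1 *: (y - z)) =
    (gf x - gf y) + lam^-1 *: (x - y).
  by apply/rowP => i; rewrite !mxE; ring.
apply: (le_trans (norm2_tri _ _)).
rewrite norm2Z ger0_norm; last by rewrite invr_ge0 ltW.
rewrite mulrDl lerD2r.
exact: Hlip.
Qed.
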